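(* Let $m\ge1$ and $k\ge0$ be integers. Then for every $n\in[km,(k+1)m)$ and $l\in\{1,\dots,d\}$, $$\mathcal D(\mathfrak x^l_n)\le\mathcal D(\mathfrak x^l_0)\big(1+\mathcal H^l_{[km,n)}\big)\prod_{s=1}^k\Big(1-\gamma(1-\gamma)^{m-1}\mathcal G_{[(s-1)m,sm)}+\mathcal H^l_{[(s-1)m,sm)}\Big),$$ with the convention $\mathcal H^l_{[km,km)}=0$.
   Context: Setting (random batch CBO). Fix integers $N\ge2$, $d\ge1$, batch size $P\ge2$, drift $\gamma\in(0,1)$, noise level $\zeta\ge0$; $\mathcal N=\{1,\dots,N\}$. Weight functions $\omega_{S,j}:(\mathbb R^d)^N\to[0,\infty)$ for nonempty $S\subseteq\mathcal N$, $j\in\mathcal N$, with $\sum_{j\in S}\omega_{S,j}=1$ and $\omega_{S,j}=0$ for $j\notin S$. $\mathcal A$ is the set of partitions of $\mathcal N$ into $\lceil N/P\rceil$ batches, all of size $P$ except possibly one of size at most $P$; $(\mathcal B^n)_{n\ge0}$ i.i.d. uniform on $\mathcal A$; $[i]_n$ is the batch of $\mathcal B^n$ containing $i$. Noise arrays $(\eta^{i,l}_n)_{i,l}$ are i.i.d. in $n$ with $\mathbb E\eta^{i,l}_n=0$, $\mathbb E|\eta^{i,l}_n|^2\le\zeta^2$; initial data, batches, and noises are mutually independent. The dynamics is $\mathbf x^i_{n+1}=\mathbf x^i_n-\gamma(\mathbf x^i_n-\bar{\mathbf x}^{[i]_n,*}_n)-\sum_{l=1}^d(x^{i,l}_n-\bar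 x^{[i]_n,*,l}_n)\eta^{i,l}_n\mathbf e_l$ with $\bar{\mathbf x}^{S,*}_n=\sum_j\omega_{S,j}(X_n)\mathbf x^j_n$, $X_n=(\mathbf x^1_n,\dots,\mathbf x^N_n)$. Let $\mathfrak x^l_n:=(x^{1,l}_n,\dots,x^{N,l}_n)^\top$, $\mathcal D(\mathbf z):=\max_iz_i-\min_iz_i$, $H^l_n:=\mathrm{diag}(\eta^{1,l}_n,\dots,\eta^{N,l}_n)$, $\|A\|_{1,\infty}:=\max_i\sum_j|a_{ij}|$. For $n\ge0$, $m\ge1$: $\mathcal G_{[n,n+m)}:=\min_{i,j}|\{r:n\le r<n+m,[i]_r=[j]_r\}|$ and $\mathcal H^l_{[n,n+m)}:=2\big[\prod_{r=n}^{n+m-1}(1+2\|H^l_r\|_{1,\infty})-1\big]$. *)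

(* Defs.v *)
From HB Require Import structures.
From mathcomp Require Import all_boot all_order all_algebra.
From mathcomp Require Import reals.
Set Implicit Arguments. Unset Strict Implicit. Unset Printing Implicit Defensive.
Import Order.TTheory GRing.Theory Num.Theory.
Local Open Scope ring_scope.

Section CBO.
Variable R : realType.

(* maximum / minimum of a real function over a (nonempty) finite type;
   the value 0 for an empty type is an irrelevant default. *)
Definition fmax (T : finType) (z : T -> R) : R :=
  match [pick i : T] with
  | Some i0 => \big[Num.max/z i0]_(i : T) z i
  | None => 0 end.
Definition fmin (T : finType) (z : T -> R) : R :=
  match [pick i : T] with
  | Some i0 => \big[Num.min/z i0]_(i : T) z i
  | None => 0 end.

Definition Dspread (N : nat) (z : 'I_N -> R) : R := fmax z - fmin z.

Definition norm1inf (N : nat) (A : 'M[R]_N) : R :=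
  fmax (fun i : 'I_N => \sum_(j < N) `|A i j|).

(* The admissible batch partitions: partitions of {1..N} into ceil(N/P)
   batches, all of size P except possibly one of size at most P. *)
Definition batch_partition (N P : nat) (Pt : {set {set 'I_N}}) : bool :=
  [&& partition Pt [set: 'I_N],
      #|Pt| == ((N + P).-1 %/ P)%N &
      [exists B0 in Pt, (#|B0| <= P)%N && [forall B in Pt, (B != B0) ==> (#|B| == P)]]].

Definition batch_of (N : nat) (Pt : {set {set 'I_N}}) (i : 'I_N) : {set 'I_N} :=
  pblock Pt i.

Definition xbar (N d : nat)
  (omega : {set 'I_N} -> 'I_N -> ('I_N -> 'I_d -> R) -> R)
  (S : {set 'I_N}) (X : 'I_N -> 'I_d -> R) (l : 'I_d) : R :=
  \sum_(j < N) omega S j X * X j l.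

Fixpoint cbo (N d : nat) (gamma : R)
  (omega : {set 'I_N} -> 'I_N -> ('I_N -> 'I_d -> R) -> R)
  (B : nat -> {set {set 'I_N}}) (eta : nat -> 'I_N -> 'I_d -> R)
  (x0 : 'I_N -> 'I_d -> R) (n : nat) : 'I_N -> 'I_d -> R :=
  match n with
  | 0 => x0
  | n'.+1 =>
      let X := cbo gamma omega B eta x0 n' in
      fun i l =>
        X i l - gamma * (X i l - xbar omega (batch_of (B n') i) X l)
              - (X i l - xbar omega (batch_of (B n') i) X l) * eta n' i l
  end.

Definition Gcal (N : nat) (B : nat -> {set {set 'I_N}}) (n m : nat) : R :=
  fmin (fun ij : 'I_N * 'I_N =>
    (#|[set r : 'I_(n + m) | (n <= r)%N &&
         (batch_of (B r) ij.1 == batch_of (B r) ij.2)]|)%:R).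

Definition Hmat (N d : nat) (eta : nat -> 'I_N -> 'I_d -> R) (l : 'I_d) (r : nat)
  : 'M[R]_N := diag_mx (\row_(i < N) eta r i l).

(* H^l_{[n,n+m)} = 2 [ prod_{r=n}^{n+m-1} (1 + 2 ||H^l_r||_{1,oo}) - 1 ];
   for m = 0 this is 0, matching the convention H^l_{[km,km)} = 0. *)
Definition Hcal (N d : nat) (eta : nat -> 'I_N -> 'I_d -> R) (l : 'I_d) (n m : nat)
  : R := 2 * (\prod_(n <= r < n + m) (1 + 2 * norm1inf (Hmat eta l r)) - 1).

End CBO.

(* Main.v *)
Require Import Defs.
From HB Require Import structures.
From mathcomp Require Import all_boot all_order all_algebra.
From mathcomp Require Import reals.
From mathcomp Require Import ring lra.
Import Order.TTheory GRing.Theory Num.Theory.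
Set Implicit Arguments. Unset Strict Implicit. Unset Printing Implicit Defensive.
Local Open Scope ring_scope.

Section Gen.
Variable R : realType.

Lemma bigmax_seq_ge (I : eqType) (s : seq I) (z : I -> R) (x0 : R) j :
  j \in s -> z j <= \big[Num.max/x0]_(i <- s) z i.
Proof.
elim: s => [//|a s IH]; rewrite big_cons inE => /orP [/eqP->|/IH H].
  by rewrite le_max lexx.
by rewrite le_max H orbT.
Qed.

Lemma bigmin_seq_le (I : eqType) (s : seq I) (z : I -> R) (x0 : R) j :
  j \in s -> \big[Num.min/x0]_(i <- s) z i <= z j.
Proof.
elim: s => [//|a s IH]; rewrite big_cons inE => /orP [/eqP->|/IH H].
  by rewrite ge_min lexx.
by rewrite ge_min H orbT.
Qed.

Lemma fmax_ge (T : finType) (z : T -> R) i : z i <= fmax z.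
Proof.
rewrite /fmax; case: pickP => [i0 _|/(_ i)//].
by apply: bigmax_seq_ge; rewrite mem_index_enum.
Qed.

Lemma fmin_le (T : finType) (z : T -> R) i : fmin z <= z i.
Proof.
rewrite /fmin; case: pickP => [i0 _|/(_ i)//].
by apply: bigmin_seq_le; rewrite mem_index_enum.
Qed.

Lemma fmax_att (T : finType) (z : T -> R) (i1 : T) : exists i, fmax z = z i.
Proof.
rewrite /fmax; case: pickP => [i0 _|/(_ i1)//].
apply: (big_ind (fun v => exists i, v = z i)); first by exists i0.
  move=> x y [a ->] [b ->]; rewrite /Order.max; case: ifP => _.
    by exists b.
  by exists a.
by move=> i _; exists i.
Qed.

Lemma fmin_att (T : finType) (z : T -> R) (i1 : T) : exists i, fmin z = z i.
Proof.
rewrite /fmin; case: pickP => [i0 _|/(_ i1)//].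
apply: (big_ind (fun v => exists i, v = z i)); first by exists i0.
  move=> x y [a ->] [b ->]; rewrite /Order.min; case: ifP => _.
    by exists a.
  by exists b.
by move=> i _; exists i.
Qed.

Lemma D_ge (N : nat) (z : 'I_N -> R) i j : z i - z j <= Dspread z.
Proof. by rewrite /Dspread lerB // ?fmax_ge ?fmin_le. Qed.

Lemma D_ge0 (N : nat) (z : 'I_N -> R) (i1 : 'I_N) : 0 <= Dspread z.
Proof. by have := D_ge z i1 i1; rewrite subrr. Qed.

Lemma D_le (N : nat) (z : 'I_N -> R) (i1 : 'I_N) c :
  (forall i j, z i - z j <= c) -> Dspread z <= c.
Proof.
move=> H; have [a Ha] := fmax_att z i1; have [b Hb] := fmin_att z i1.
by rewrite /Dspread Ha Hb.
Qed.

Lemma prod_ge1 (s : seq nat) (F : nat -> R) :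
  (forall i, 0 <= F i) -> 1 <= \prod_(i <- s) (1 + F i).
Proof.
move=> H; elim: s => [|a s IH]; rewrite ?big_nil ?big_cons //.
have := H a; nra.
Qed.

End Gen.
Section Main.
Variables (R : realType) (N d : nat) (gamma : R)
  (omega : {set 'I_N} -> 'I_N -> ('I_N -> 'I_d -> R) -> R)
  (B : nat -> {set {set 'I_N}}) (eta : nat -> 'I_N -> 'I_d -> R)
  (x0 : 'I_N -> 'I_d -> R) (l : 'I_d) (i0 : 'I_N).
Hypothesis g0 : 0 < gamma.
Hypothesis g1 : gamma < 1.
Hypothesis om_ge0 : forall S X, S != set0 -> forall j, 0 <= omega S j X.
Hypothesis om_sum : forall S X, S != set0 -> \sum_(j in S) omega S j X = 1.
Hypothesis om_out : forall S X, S != set0 -> forall j, j \notin S -> omega S j X = 0.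
Hypothesis Bmem : forall r i, i \in batch_of (B r) i.

Ltac glra := have G0 := g0; have G1 := g1; lra.
Ltac gnra := have G0 := g0; have G1 := g1; nra.

Definition y r i := cbo gamma omega B eta x0 r i l.
Definition w r i j := omega (batch_of (B r) i) j (cbo gamma omega B eta x0 r).
Definition h r := norm1inf (Hmat eta l r).

Lemma y_step r i : y r.+1 i = y r i - gamma * (y r i - \sum_j w r i j * y r j)
   - (y r i - \sum_j w r i j * y r j) * eta r i l.
Proof. by []. Qed.

Lemma Sne r i : batch_of (B r) i != set0.
Proof. by apply/set0Pn; exists i. Qed.

Lemma w_ge0 r i j : 0 <= w r i j.
Proof. exact: om_ge0 (Sne r i) j. Qed.

Lemma w_sum r i : \sum_j w r i j = 1.
Proof.
rewrite (bigID (fun j => j \in batch_of (B r) i)) /=.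
rewrite [X in _ + X]big1 ?addr0; first exact: om_sum (Sne r i).
by move=> j Hj; apply: om_out (Sne r i) _ Hj.
Qed.

Lemma h_eta r i : `|eta r i l| <= h r.
Proof.
apply: le_trans (fmax_ge _ i).
rewrite (bigD1 i) //= /Hmat !mxE eqxx mulr1n big1 ?addr0 //.
by move=> j /negbTE; rewrite !mxE eq_sym => ->; rewrite mulr0n normr0.
Qed.

Lemma h_ge0 r : 0 <= h r.
Proof. exact: le_trans (normr_ge0 _) (h_eta r i0). Qed.

Fixpoint p (n t : nat) (i k : 'I_N) {struct t} : R :=
  if t is t'.+1 then (1 - gamma) * p n t' i k + gamma * \sum_j w (n + t') i j * p n t' j k
  else (i == k)%:R.

Lemma p_ge0 n t i k : 0 <= p n t i k.
Proof.
elim: t i k => [|t IH] i k /=; first by rewrite ler0n.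
apply: addr_ge0; apply: mulr_ge0.
- glra.
- exact: IH.
- glra.
- by apply: sumr_ge0 => j _; apply: mulr_ge0; [apply: w_ge0|apply: IH].
Qed.

Lemma p_sum n t i : \sum_k p n t i k = 1.
Proof.
elim: t i => [|t IH] i /=.
  rewrite (bigD1 i) //= eqxx big1 ?addr0 // => k /negbTE.
  by rewrite eq_sym => ->.
rewrite big_split /= -!mulr_sumr IH exchange_big /=.
under eq_bigr => j _ do rewrite -mulr_sumr IH mulr1.
rewrite w_sum; glra.
Qed.

Lemma p_diag n t k : (1 - gamma) ^+ t <= p n t k k.
Proof.
elim: t => [|t IH] /=; first by rewrite expr0 eqxx.
have H1 : 0 <= gamma * \sum_j w (n + t) k j * p n t j k.
  apply: mulr_ge0; first glra.
  by apply: sumr_ge0 => j _; apply: mulr_ge0; [apply: w_ge0|apply: p_ge0].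
have H2 : (1 - gamma) * (1 - gamma) ^+ t <= (1 - gamma) * p n t k k.
  by apply: ler_wpM2l => //; glra.
rewrite exprS; glra.
Qed.

Lemma p_low n t i k :
  gamma * (1 - gamma) ^+ t * \sum_(r < t) w (n + r) i k <= (1 - gamma) * p n t i k.
Proof.
elim: t => [|t IH] /=.
  by rewrite big_ord0 mulr0; apply: mulr_ge0; [glra|exact: (p_ge0 n 0 i k)].
rewrite big_ord_recr /=.
have S1 : w (n + t) i k * p n t k k <= \sum_j w (n + t) i j * p n t j k.
  rewrite (bigD1 k) //= lerDl.
  by apply: sumr_ge0 => j _; apply: mulr_ge0; [apply: w_ge0|apply: p_ge0].
have S2 : w (n + t) i k * (1 - gamma) ^+ t <= w (n + t) i k * p n t k k.
  by apply: ler_wpM2l; [apply: w_ge0|apply: p_diag].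
have S3 : (1 - gamma) * (gamma * (1 - gamma) ^+ t * \sum_(r < t) w (n + r) i k)
   <= (1 - gamma) * ((1 - gamma) * p n t i k).
  by apply: ler_wpM2l => //; glra.
have S4 : (1 - gamma) * gamma * (w (n + t) i k * (1 - gamma) ^+ t)
   <= (1 - gamma) * gamma * \sum_j w (n + t) i j * p n t j k.
  apply: ler_wpM2l; first by apply: mulr_ge0; glra.
  exact: le_trans S2 S1.
rewrite exprS.
set a := (1 - gamma) ^+ t in S2 S3 S4 *.
set Sm := \sum_(r < t) _ in S3 *.
set Sj := \sum_j _ in S1 S4 *.
gnra.
Qed.
Definition z n t i := \sum_k p n t i k * y n k.

Lemma z_step n t i :
  z n t.+1 i = (1 - gamma) * z n t i + gamma * \sum_j w (n + t) i j * z n t j.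
Proof.
rewrite /z /=.
under eq_bigr => k _ do rewrite mulrDl -!mulrA mulr_suml.
rewrite big_split /= -!mulr_sumr; congr (_ + _ * _).
rewrite exchange_big /=; apply: eq_bigr => j _.
by rewrite mulr_sumr; apply: eq_bigr => k _; rewrite mulrA.
Qed.

Lemma z_le n t i : z n t i <= fmax (y n).
Proof.
rewrite /z; apply: le_trans (_ : \sum_k p n t i k * fmax (y n) <= _).
  by apply: ler_sum => k _; apply: ler_wpM2l; [apply: p_ge0|apply: fmax_ge].
by rewrite -mulr_suml p_sum mul1r.
Qed.

Lemma z_ge n t i : fmin (y n) <= z n t i.
Proof.
rewrite /z; apply: le_trans (_ : \sum_k p n t i k * fmin (y n) <= _).
  by rewrite -mulr_suml p_sum mul1r.
by apply: ler_sum => k _; apply: ler_wpM2l; [apply: p_ge0|apply: fmin_le].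
Qed.

Lemma avg_le (r : nat) i (v : 'I_N -> R) c :
  (forall j, v j <= c) -> \sum_j w r i j * v j <= c.
Proof.
move=> H; apply: le_trans (_ : \sum_j w r i j * c <= _).
  by apply: ler_sum => k _; apply: ler_wpM2l; [apply: w_ge0|apply: H].
by rewrite -mulr_suml w_sum mul1r.
Qed.

Lemma avg_ge (r : nat) i (v : 'I_N -> R) c :
  (forall j, c <= v j) -> c <= \sum_j w r i j * v j.
Proof.
move=> H; apply: le_trans (_ : \sum_j w r i j * c <= _).
  by rewrite -mulr_suml w_sum mul1r.
by apply: ler_sum => k _; apply: ler_wpM2l; [apply: w_ge0|apply: H].
Qed.

Definition PP n t := \prod_(n <= r < n + t) (1 + 2 * h r).

Lemma PP_ge1 n t : 1 <= PP n t.
Proof. by apply: prod_ge1 => r; apply: mulr_ge0 => //; apply: h_ge0. Qed.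

Lemma e_bound n t i :
  `|y (n + t) i - z n t i| <= (PP n t - 1) * Dspread (y n).
Proof.
have D0 := D_ge0 (y n) i0.
elim: t i => [|t IH] i.
  rewrite /PP addn0 big_geq // subrr mul0r /z /=.
  rewrite (bigD1 i) //= eqxx mul1r big1 ?addr0 ?subrr ?normr0 //.
  by move=> k /negbTE; rewrite eq_sym => ->; rewrite mul0r.
rewrite addnS y_step z_step.
have -> : PP n t.+1 = PP n t * (1 + 2 * h (n + t)).
  by rewrite /PP addnS big_nat_recr //= leq_addr.
set D := Dspread (y n).
set u := y (n + t) i.
set A := \sum_j w (n + t) i j * y (n + t) j.
set zi := z n t i.
set Az := \sum_j w (n + t) i j * z n t j.
set v := eta (n + t) i l.
set eps := (PP n t - 1) * D.
have Fa : `|u - zi| <= eps by apply: IH.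
have Fb : `|A - Az| <= eps.
  rewrite /A /Az -sumrB.
  under eq_bigr => j _ do rewrite -mulrBr.
  apply: le_trans (ler_norm_sum _ _ _) _.
  under eq_bigr => j _ do rewrite normrM (ger0_norm (w_ge0 _ _ _)).
  by apply: avg_le => j; apply: IH.
have Fc : `|zi - Az| <= D.
  have h1 := z_le n t i; have h2 := z_ge n t i.
  have h3 : Az <= fmax (y n) by apply: avg_le => j; apply: z_le.
  have h4 : fmin (y n) <= Az by apply: avg_ge => j; apply: z_ge.
  rewrite /D /Dspread /zi /Az in h3 h4 *; rewrite ler_norml; apply/andP; split; lra.
have Fv : `|v| <= h (n + t) by apply: h_eta.
have hge := h_ge0 (n + t).
have E : u - gamma * (u - A) - (u - A) * v - ((1 - gamma) * zi + gamma * Az)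
   = (1 - gamma) * (u - zi) + gamma * (A - Az) - ((u - zi) + (zi - Az) - (A - Az)) * v.
  by ring.
rewrite E.
have K1 : `|(u - zi) + (zi - Az) - (A - Az)| <= 2 * eps + D.
  apply: le_trans (ler_normB _ _) _.
  apply: le_trans (lerD (ler_normD _ _) (lexx _)) _.
  lra.
have K2 : `|((u - zi) + (zi - Az) - (A - Az)) * v| <= (2 * eps + D) * h (n + t).
  by rewrite normrM; apply: ler_pM.
have K3 : `|(1 - gamma) * (u - zi)| <= (1 - gamma) * eps.
  by rewrite normrM ger0_norm; [apply: ler_wpM2l => //; glra | glra].
have K4 : `|gamma * (A - Az)| <= gamma * eps.
  by rewrite normrM ger0_norm; [apply: ler_wpM2l => //; glra | glra].
have K5 : 0 <= h (n + t) * D by apply: mulr_ge0.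
apply: le_trans (ler_normB _ _) _.
apply: le_trans (lerD (ler_normD _ _) (lexx _)) _.
rewrite /eps in K1 K2 K3 K4.
set P := PP n t in K1 K2 K3 K4 *.
set hh := h (n + t) in K2 K5 *.
glra.
Qed.
Lemma Hcal_PP n t : Hcal eta l n t = 2 * (PP n t - 1).
Proof. by []. Qed.

Lemma Hcal_ge0 n t : 0 <= Hcal eta l n t.
Proof. rewrite Hcal_PP; have := PP_ge1 n t; lra. Qed.

Lemma blockT n t :
  Dspread (y (n + t)) <= Dspread (y n) * (1 + Hcal eta l n t).
Proof.
apply: (@D_le _ _ _ i0) => i j.
have Ei := e_bound n t i; have Ej := e_bound n t j.
have h1 := z_le n t i; have h2 := z_ge n t j.
rewrite Hcal_PP.
move: Ei Ej; rewrite !ler_norml => /andP [Ei1 Ei2] /andP [Ej1 Ej2].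
move: Ei1 Ei2 Ej1 Ej2 h1 h2; rewrite /Dspread.
set P := PP n t => Ei1 Ei2 Ej1 Ej2 h1 h2; lra.
Qed.

Lemma z_contr n t i j :
  z n t i - z n t j
  <= (1 - \sum_k Num.min (p n t i k) (p n t j k)) * Dspread (y n).
Proof.
set mu := fun k => Num.min (p n t i k) (p n t j k).
have E : z n t i - z n t j
   = \sum_k (p n t i k - mu k) * y n k - \sum_k (p n t j k - mu k) * y n k.
  by rewrite /z -!sumrB; apply: eq_bigr => k _; ring.
have L1 : \sum_k (p n t i k - mu k) * y n k <= \sum_k (p n t i k - mu k) * fmax (y n).
  apply: ler_sum => k _; apply: ler_wpM2l; last exact: fmax_ge.
  by rewrite subr_ge0 /mu ge_min lexx.
have L2 : \sum_k (p n t j k - mu k) * fmin (y n) <= \sum_k (p n t j k - mu k) * y n k.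
  apply: ler_sum => k _; apply: ler_wpM2l; last exact: fmin_le.
  by rewrite subr_ge0 /mu ge_min lexx orbT.
rewrite -!mulr_suml !sumrB !p_sum in L1 L2.
rewrite E /Dspread.
set M := \sum_k mu k in L1 L2 *.
lra.
Qed.

Definition same n i j r := (batch_of (B (n + r)) i == batch_of (B (n + r)) j).

Lemma mu_low n m i j : (1 <= m)%N ->
  gamma * (1 - gamma) ^+ m.-1 * \sum_(r < m) ((same n i j r)%:R : R)
  <= \sum_k Num.min (p n m i k) (p n m j k).
Proof.
case: m => [//|m'] _ /=.
set q := gamma * (1 - gamma) ^+ m'.
have q0 : 0 <= q by apply: mulr_ge0; [glra| apply: exprn_ge0; glra].
have hg : 0 < 1 - gamma by glra.
have Pl : forall a k, q * \sum_(r < m'.+1) w (n + r) a k <= p n m'.+1 a k.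
  move=> a k; rewrite -(ler_pM2l hg).
  apply: le_trans (p_low n m'.+1 a k).
  by rewrite le_eqVlt; apply/orP; left; apply/eqP; rewrite /q exprS; ring.
have Hk : forall k, q * \sum_(r < m'.+1) (same n i j r)%:R * w (n + r) i k
     <= Num.min (p n m'.+1 i k) (p n m'.+1 j k).
  move=> k.
  have Ss : \sum_(r < m'.+1) (same n i j r)%:R * w (n + r) i k
       <= \sum_(r < m'.+1) w (n + r) i k.
    apply: ler_sum => r _; case: (same n i j r); rewrite ?mul1r ?mul0r //.
    exact: w_ge0.
  have Se : \sum_(r < m'.+1) (same n i j r)%:R * w (n + r) i k
       = \sum_(r < m'.+1) (same n i j r)%:R * w (n + r) j k.
    apply: eq_bigr => r _; rewrite /same.
    case E: (batch_of (B (n + r)) i == batch_of (B (n + r)) j); last by rewrite !mul0r.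
    by rewrite /w (eqP E).
  have Ssj : \sum_(r < m'.+1) (same n i j r)%:R * w (n + r) j k
       <= \sum_(r < m'.+1) w (n + r) j k.
    apply: ler_sum => r _; case: (same n i j r); rewrite ?mul1r ?mul0r //.
    exact: w_ge0.
  rewrite le_min; apply/andP; split.
    exact: le_trans (ler_wpM2l q0 Ss) (Pl i k).
  by rewrite Se; exact: le_trans (ler_wpM2l q0 Ssj) (Pl j k).
apply: le_trans (ler_sum _ (fun k _ => Hk k)).
rewrite -mulr_sumr exchange_big /=.
under [X in _ <= _ * X]eq_bigr => r _ do rewrite -mulr_sumr w_sum mulr1.
by [].
Qed.

Lemma card_same n m i j :
  (#|[set r : 'I_(n + m) | (n <= r)%N && (batch_of (B r) i == batch_of (B r) j)]|)%:R
  = \sum_(r < m) ((same n i j r)%:R : R).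
Proof.
rewrite -sum1_card big_mkcond /= natr_sum.
under eq_bigr => r _ do rewrite in_set.
rewrite -(big_mkord xpredT (fun r : nat =>
   ((if (n <= r)%N && (batch_of (B r) i == batch_of (B r) j) then 1 else 0)%N%:R : R))).
rewrite (@big_cat_nat _ _ _ n 0 (n + m)) ?leq_addr //=.
rewrite big_nat_cond big1 ?add0r; last first.
  by move=> r /andP [/andP [_ hr] _]; rewrite leqNgt hr.
rewrite -{1}[n]add0n big_addn addKn big_mkord.
by apply: eq_bigr => r _; rewrite leq_addl /= /same addnC.
Qed.

Lemma blockM n m : (1 <= m)%N ->
  Dspread (y (n + m)) <= Dspread (y n) *
    (1 - gamma * (1 - gamma) ^+ m.-1 * Gcal R B n m + Hcal eta l n m)
  /\ 0 <= 1 - gamma * (1 - gamma) ^+ m.-1 * Gcal R B n m.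
Proof.
move=> hm.
set q := gamma * (1 - gamma) ^+ m.-1.
have q0 : 0 <= q by apply: mulr_ge0; [glra| apply: exprn_ge0; glra].
have HG : forall i j, q * Gcal R B n m <= \sum_k Num.min (p n m i k) (p n m j k).
  move=> i j; apply: le_trans (mu_low n i j hm).
  apply: ler_wpM2l => //; rewrite -card_same.
  exact: (fmin_le _ (i, j)).
have D0 := D_ge0 (y n) i0.
have G1 : q * Gcal R B n m <= 1.
  apply: le_trans (HG i0 i0) _; rewrite -(p_sum n m i0).
  by apply: ler_sum => k _; rewrite ge_min lexx.
split; last by rewrite subr_ge0.
apply: (@D_le _ _ _ i0) => i j.
have Ei := e_bound n m i; have Ej := e_bound n m j.
have Zc := z_contr n m i j.
have Zc2 : (1 - \sum_k Num.min (p n m i k) (p n m j k)) * Dspread (y n)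
    <= (1 - q * Gcal R B n m) * Dspread (y n).
  by apply: ler_wpM2r => //; have := HG i j; lra.
rewrite Hcal_PP.
move: Ei Ej; rewrite !ler_norml => /andP [Ei1 Ei2] /andP [Ej1 Ej2].
move: Zc Zc2 D0 Ei1 Ei2 Ej1 Ej2.
set P := PP n m; set D := Dspread (y n); set G := q * Gcal R B n m.
move=> Zc Zc2 D0 Ei1 Ei2 Ej1 Ej2.
lra.
Qed.

Lemma main_k m k : (1 <= m)%N ->
  Dspread (y (k * m)) <= Dspread (y 0) * \prod_(1 <= s < k.+1)
    (1 - gamma * (1 - gamma) ^+ m.-1 * Gcal R B (s.-1 * m) m + Hcal eta l (s.-1 * m) m).
Proof.
move=> hm; elim: k => [|k IH].
  by rewrite mul0n big_geq // mulr1.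
rewrite big_nat_recr // mulSnr /=.
have [H1 H2] := blockM (k * m) hm.
apply: le_trans H1 _; rewrite mulrA; apply: ler_wpM2r => //.
exact: addr_ge0 H2 (Hcal_ge0 _ _).
Qed.

End Main.
Unset Implicit Arguments.

Theorem lemma4p4 (R : realType) (N d P : nat) (gamma : R)
  (omega : {set 'I_N} -> 'I_N -> ('I_N -> 'I_d -> R) -> R)
  (B : nat -> {set {set 'I_N}}) (eta : nat -> 'I_N -> 'I_d -> R)
  (x0 : 'I_N -> 'I_d -> R) :
  (2 <= N)%N -> (1 <= d)%N -> (2 <= P)%N -> 0 < gamma < 1 ->
  (forall S X, S != set0 -> forall j, 0 <= omega S j X) ->
  (forall S X, S != set0 -> \sum_(j in S) omega S j X = 1) ->
  (forall S X, S != set0 -> forall j, j \notin S -> omega S j X = 0) ->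
  (forall n, batch_partition P (B n)) ->
  forall (m k : nat), (1 <= m)%N ->
  forall (n : nat) (l : 'I_d), (k * m <= n < k.+1 * m)%N ->
    Dspread (fun i => cbo gamma omega B eta x0 n i l)
    <= Dspread (fun i => x0 i l) * (1 + Hcal eta l (k * m) (n - k * m))
       * \prod_(1 <= s < k.+1)
           (1 - gamma * (1 - gamma) ^+ m.-1 * Gcal R B (s.-1 * m) m
              + Hcal eta l (s.-1 * m) m).
Proof.
move=> hN _ _ /andP [g0 g1] om_ge0 om_sum om_out hB m k hm n l /andP [hn1 _].
have i0 : 'I_N := Ordinal (ltnW hN).
have Bmem : forall r i, i \in batch_of (B r) i.
  move=> r i; rewrite /batch_of mem_pblock.
  have := hB r; rewrite /batch_partition => /and3P [/and3P [/eqP -> _ _] _ _].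
  exact: in_setT.
have H1 := blockT eta x0 l i0 g0 g1 om_ge0 om_sum om_out Bmem (k * m) (n - k * m).
rewrite subnKC // in H1.
have H2 := main_k eta x0 l i0 g0 g1 om_ge0 om_sum om_out Bmem k hm.
have Hc := Hcal_ge0 eta l i0 (k * m) (n - k * m).
apply: le_trans H1 _.
rewrite mulrAC; apply: ler_wpM2r; first by apply: addr_ge0.
exact: H2.
Qed.
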